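(* Let ${\tt G}$ be a digraph and let $P$ be a downward closed (or upward closed) sub-poset of $SSG({\tt G})$. Then any two sign assignments $\epsilon,\epsilon'$ on $P$ are isomorphic, i.e. there is $\eta\colon P\to\mathbb Z_2$ with $\eta(x)+\epsilon'_{x,y}\equiv\epsilon_{x,y}+\eta(y)\pmod 2$ for every covering pair $x\,\tilde\triangleleft\,y$ in $P$.
   Context: A digraph ${\tt G}=(V,E)$ has finite $V$ and $E\subseteq(V\times V)\setminus\{(v,v)\}$. $SSG({\tt G})$ is the poset of spanning subgraphs of ${\tt G}$ (all vertices, any subset of edges) ordered by inclusion of edge sets. A sub-poset $P$ (with induced order) is downward closed if $h\le h'$ with $h'\in P$ implies $h\in P$, and upward closed if $h'\le h$ with $h'\in P$ implies $h\in P$. In a poset, $x\,\tilde\triangleleft\,y$ ($y$ covers $x$) means $x<y$ with nothing strictly between; a square is $x,y,y',z$ with $y\neq y'$, $x\,\tilde\triangleleft\,y\,\tilde\triangleleft\,z$, $x\,\tilde\triangleleft\,y'\,\tilde\triangleleft\,z$. A sign assignment assigns $\epsilon_{x,y}\in\mathbb Z_2$ to each covering pair such that $\epsilon_{x,y}+\epsilon_{y,z}\equiv\epsilon_{x,y'}+\epsilon_{y',z}+1\pmod 2$ for every square. *)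

(* Defs.v *)
From mathcomp Require Import all_boot all_order all_algebra.
Set Implicit Arguments. Unset Strict Implicit. Unset Printing Implicit Defensive.
Import GRing.Theory.
Local Open Scope ring_scope.

(* A digraph G = (V, E): V a finite type, E a set of ordered pairs with no loops. *)
Definition loopless (V : finType) (E : {set V * V}) : Prop :=
  forall v : V, (v, v) \notin E.

(* Spanning subgraphs of G are identified with their edge sets h \subset E;
   SSG(G) is ordered by inclusion. A sub-poset is a set P of such edge sets. *)
Definition subposet_SSG (V : finType) (E : {set V * V})
  (P : {set {set V * V}}) : Prop :=
  forall h : {set V * V}, h \in P -> h \subset E.

Definition downward_closed (V : finType) (E : {set V * V})
  (P : {set {set V * V}}) : Prop :=
  forall h h' : {set V * V}, h \subset E -> h \subset h' -> h' \in P -> h \in P.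

Definition upward_closed (V : finType) (E : {set V * V})
  (P : {set {set V * V}}) : Prop :=
  forall h h' : {set V * V}, h \subset E -> h' \subset h -> h' \in P -> h \in P.

Definition covers_in (V : finType) (P : {set {set V * V}}) (x y : {set V * V}) : Prop :=
  [/\ x \in P, y \in P, x \proper y &
      forall z : {set V * V}, z \in P -> x \proper z -> z \proper y -> False].

Definition square_in (V : finType) (P : {set {set V * V}}) (x y y' z : {set V * V}) : Prop :=
  [/\ y != y', covers_in P x y, covers_in P y z, covers_in P x y' & covers_in P y' z].

(* A sign assignment on P: a Z_2-valued function on pairs (only its values
   on covering pairs matter) satisfying the square condition. *)
Definition sign_assignment (V : finType) (P : {set {set V * V}})
  (eps : {set V * V} -> {set V * V} -> 'Z_2) : Prop :=
  forall x y y' z, square_in P x y y' z ->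
    eps x y + eps y z = eps x y' + eps y' z + 1.

Definition sign_iso (V : finType) (P : {set {set V * V}})
  (eps eps' : {set V * V} -> {set V * V} -> 'Z_2) : Prop :=
  exists eta : {set V * V} -> 'Z_2,
    forall x y, covers_in P x y -> eta x + eps' x y = eps x y + eta y.

(* Main.v *)
Require Import Defs.
From mathcomp Require Import all_boot all_order all_algebra zify.
Set Implicit Arguments. Unset Strict Implicit. Unset Printing Implicit Defensive.
Import GRing.Theory.
Local Open Scope ring_scope.

Lemma z2_double (z : 'Z_2) : z + z = 0.
Proof. case: z => [[|[|]]] // i; apply: val_inj => //=. Qed.

Section Abs.
Variable T : finType.
Variable Q : {set T} -> Prop.
Variable d : {set T} -> {set T} -> 'Z_2.
Hypothesis Qdown : forall L L' : {set T}, L' \subset L -> Q L -> Q L'.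
Hypothesis Qsq : forall (M : {set T}) (a b : T), a != b -> a \notin M -> b \notin M -> Q (a |: (b |: M)) ->
  d M (a |: M) + d (a |: M) (a |: (b |: M)) = d M (b |: M) + d (b |: M) (a |: (b |: M)).

Fixpoint ps (l : seq T) : 'Z_2 :=
  if l is a :: l' then ps l' + d [set:: l'] (a |: [set:: l']) else 0.

Lemma set_perm (s1 s2 : seq T) : perm_eq s1 s2 -> [set:: s1] = [set:: s2].
Proof. by move=> /perm_mem H; apply/setP=> x; rewrite !inE H. Qed.

Lemma ps_perm n : forall l1 l2, size l1 = n -> uniq l1 -> perm_eq l1 l2 ->
  Q [set:: l1] -> ps l1 = ps l2.
Proof.
elim: n => [|n IH] [|a l1] [|b l2] //=; try by move=> _ _ /perm_size.
move=> [sz] /andP [al1 u1] pe Ql.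
have Q1 : Q [set:: l1] by apply: Qdown Ql; rewrite set_cons subsetUr.
have [eab|nab] := eqVneq a b.
  subst b. have pe' : perm_eq l1 l2 by rewrite perm_cons in pe.
  by rewrite (IH l1 l2 sz u1 pe' Q1) (set_perm pe').
have bl1 : b \in l1.
  have : b \in a :: l1 by rewrite (perm_mem pe) mem_head.
  by rewrite inE eq_sym (negbTE nab).
set m := rem b l1.
have p1 : perm_eq l1 (b :: m) by apply: perm_to_rem.
have p2 : perm_eq l2 (a :: m).
  have : perm_eq (b :: l2) (b :: a :: m).
    apply: (perm_trans (y := a :: l1)); first by rewrite perm_sym.
    apply: (perm_trans (y := a :: b :: m)); first by rewrite perm_cons.
    by rewrite -[a :: b :: m]/([:: a] ++ [:: b] ++ m) perm_catCA.
  by rewrite perm_cons.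
have u2 : uniq l2.
  by have := perm_uniq pe; rewrite /= al1 u1 => /esym /andP [].
have sz2 : size l2 = n by have := perm_size pe; rewrite /= sz; case.
have Q2 : Q [set:: l2].
  by apply: Qdown Ql; rewrite (set_perm pe) set_cons subsetUr.
rewrite (IH _ _ sz u1 p1 Q1) (IH _ _ sz2 u2 p2 Q2).
have e1 := set_perm p1. have e2 := set_perm p2. rewrite e1 e2 /=.
have um : uniq (b :: m) by rewrite -(perm_uniq p1).
have am : a \notin m.
  apply: contra al1 => H; by rewrite (perm_mem p1) inE H orbT.
move: um => /andP [bm _].
rewrite !set_cons.
have ma : a \notin [set:: m] by rewrite inE.
have mb : b \notin [set:: m] by rewrite inE.
have QQ : Q (a |: (b |: [set:: m])).
  by move: Ql; rewrite (set_perm pe) set_cons (set_perm p2) set_cons setUCA.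
have := Qsq nab ma mb QQ.
rewrite [b |: (a |: _)]setUCA -!addrA => ->. done.
Qed.

Definition eta (L : {set T}) := ps (enum L).

Lemma enum_setK (L : {set T}) : [set:: enum L] = L.
Proof. by apply/setP=> x; rewrite inE mem_enum. Qed.

Lemma eta_step (L : {set T}) (a : T) : a \notin L -> Q (a |: L) -> eta (a |: L) = eta L + d L (a |: L).
Proof.
move=> aL QL.
have pe : perm_eq (a :: enum L) (enum (a |: L)).
  apply: uniq_perm; first by rewrite /= mem_enum aL enum_uniq.
    exact: enum_uniq.
  by move=> x; rewrite mem_enum !inE mem_enum.
rewrite /eta -(ps_perm (erefl _) _ pe) /=.
- by rewrite enum_setK.
- by rewrite /= mem_enum aL enum_uniq.
- by rewrite set_cons enum_setK.
Qed.
End Abs.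

Section Main.
Variables (V : finType) (E : {set V * V}) (P : {set {set V * V}}).
Local Notation S := {set V * V}.

Lemma cardED (A : S) : A \subset E -> #|E :\: A| = (#|E| - #|A|)%N.
Proof. by move=> sA; rewrite cardsD (setIidPr sA). Qed.

Lemma covers_card (x y : S) : x \in P -> y \in P -> x \subset y -> #|y| = #|x|.+1 ->
  covers_in P x y.
Proof.
move=> xP yP sxy cy; split => //.
  by rewrite properEcard sxy cy leqnn.
move=> z _ /proper_card h1 /proper_card h2; lia.
Qed.

Lemma covers_step (x y : S) :
  (forall a, a \in y -> a \notin x -> a |: x \in P) ->
  covers_in P x y -> exists a, a \notin x /\ y = a |: x.
Proof.
move=> cl [xP yP pxy nz].
have [a ay ax] : exists2 a, a \in y & a \notin x.
  have /properP [_ [a ay ax]] := pxy. by exists a.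
exists a; split => //.
have sub : a |: x \subset y by rewrite subUset sub1set ay (proper_sub pxy).
have px : x \proper a |: x by rewrite properEcard subsetUr cardsU1 ax add1n ltnSn.
case: (eqVneq (a |: x) y) => [//|ne].
exfalso; apply: (nz (a |: x)) => //; first exact: cl.
by rewrite properEneq ne sub.
Qed.

Lemma nat_aux1 (m e : nat) : (m.+2 <= e)%N -> (e - m.+1)%N = (e - m.+2).+1.
Proof. lia. Qed.
Lemma nat_aux2 (m e : nat) : (m.+2 <= e)%N -> (e - m)%N = (e - m.+1).+1.
Proof. lia. Qed.

Lemma z2_sq (e1 e2 e3 e4 f1 f2 f3 f4 : 'Z_2) :
  e1 + e2 = e3 + e4 + 1 -> f1 + f2 = f3 + f4 + 1 ->
  (e1 + f1) + (e2 + f2) = (e3 + f3) + (e4 + f4).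
Proof.
move=> H1 H2; rewrite addrACA H1 H2 addrACA [1 + 1]z2_double addr0.
by rewrite addrACA.
Qed.

Lemma z2_fin (ex ey ep eq : 'Z_2) : ey = ex + (ep + eq) -> ex + eq = ep + ey.
Proof.
move=> ->; by rewrite [RHS]addrCA [ep + (ep + _)]addrA z2_double add0r.
Qed.

Lemma z2_fin2 (ex ey ep eq : 'Z_2) : ex = ey + (ep + eq) -> ex + eq = ep + ey.
Proof. move=> ->; by rewrite -!addrA [eq + eq]z2_double addr0 addrC. Qed.

End Main.

Ltac setsolve xE :=
  let e := fresh "e" in
  apply/setP => e; rewrite !inE;
  have := subsetP xE e; rewrite ?inE;
  do 2?[case: eqVneq => //= ?; subst]; 
  repeat match goal with |- context [?t \in ?s] => case: (t \in s) => //= end.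

Theorem theorem3p16 (V : finType) (E : {set V * V}) (P : {set {set V * V}})
  (eps eps' : {set V * V} -> {set V * V} -> 'Z_2) :
  loopless E ->
  subposet_SSG E P ->
  (downward_closed E P \/ upward_closed E P) ->
  sign_assignment P eps -> sign_assignment P eps' ->
  sign_iso P eps eps'.
Proof.
move=> _ sub [down|up] He He'; set dd := fun x y => eps x y + eps' x y.
- pose Q := fun L : {set V * V} => L \in P.
  have Qdown : forall L L' : {set V * V}, L' \subset L -> Q L -> Q L'.
    by move=> L L' s LP; apply: (down L' L (subset_trans s (sub L LP)) s LP).
  have Qsq : forall (M : {set V * V}) (a b : V * V), a != b -> a \notin M -> b \notin M ->
      Q (a |: (b |: M)) ->
      dd M (a |: M) + dd (a |: M) (a |: (b |: M)) = dd M (b |: M) + dd (b |: M) (a |: (b |: M)).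
    move=> M a b nab aM bM QP.
    have inP : forall L : {set V * V}, L \subset a |: (b |: M) -> L \in P by move=> L sL; exact: Qdown sL QP.
    have abM : a \notin b |: M by rewrite in_setU1 (negbTE nab) (negbTE aM).
    have baM : b \notin a |: M by rewrite in_setU1 eq_sym (negbTE nab) (negbTE bM).
    have c1 : #|a |: M| = #|M|.+1 by rewrite cardsU1 aM.
    have c2 : #|b |: M| = #|M|.+1 by rewrite cardsU1 bM.
    have c3 : #|a |: (b |: M)| = #|M|.+2 by rewrite cardsU1 abM c2.
    have s1 : a |: M \subset a |: (b |: M) by rewrite setUS ?subsetUr.
    have s2 : b |: M \subset a |: (b |: M) by rewrite subsetUr.
    have s0 : M \subset a |: (b |: M) by rewrite (subset_trans _ s2) ?subsetUr.
    have sq : square_in P M (a |: M) (b |: M) (a |: (b |: M)).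
      split.
      - apply/eqP => h; move: abM; by rewrite -h setU11.
      - exact: covers_card (inP _ s0) (inP _ s1) (subsetUr _ _) c1.
      - by apply: covers_card (inP _ s1) (inP _ (subxx _)) s1 _; rewrite c3 c1.
      - exact: covers_card (inP _ s0) (inP _ s2) (subsetUr _ _) c2.
      - by apply: covers_card (inP _ s2) (inP _ (subxx _)) s2 _; rewrite c3 c2.
    exact: z2_sq (He _ _ _ _ sq) (He' _ _ _ _ sq).
  exists (eta dd) => x y cov.
  have cl : forall a, a \in y -> a \notin x -> a |: x \in P.
    case: cov => xP yP pxy _ a ay ax.
    have s : a |: x \subset y by rewrite subUset sub1set ay (proper_sub pxy).
    exact: (down _ y (subset_trans s (sub y yP)) s yP).
  have [a [ax ey]] := covers_step cl cov.
  case: cov => _ yP _ _.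
  apply: z2_fin; rewrite ey (@eta_step _ Q dd Qdown Qsq) //; by rewrite -ey.
- pose Q := fun L : {set V * V} => L \subset E /\ E :\: L \in P.
  pose d := fun L L' => dd (E :\: L') (E :\: L).
  have Qdown : forall L L' : {set V * V}, L' \subset L -> Q L -> Q L'.
    move=> L L' s [sE inP]; split; first exact: subset_trans s sE.
    exact: (up (E :\: L') (E :\: L) (subsetDl E L') (setDS E s) inP).
  have Qsq : forall (M : {set V * V}) (a b : V * V), a != b -> a \notin M -> b \notin M ->
      Q (a |: (b |: M)) ->
      d M (a |: M) + d (a |: M) (a |: (b |: M)) = d M (b |: M) + d (b |: M) (a |: (b |: M)).
    move=> M a b nab aM bM [sE XP].
    have inP : forall L : {set V * V}, E :\: (a |: (b |: M)) \subset L -> L \subset E -> L \in P.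
      by move=> L s1 s2; exact: up s2 s1 XP.
    have abM : a \notin b |: M by rewrite in_setU1 (negbTE nab) (negbTE aM).
    have baM : b \notin a |: M by rewrite in_setU1 eq_sym (negbTE nab) (negbTE bM).
    have c1 : #|a |: M| = #|M|.+1 by rewrite cardsU1 aM.
    have c2 : #|b |: M| = #|M|.+1 by rewrite cardsU1 bM.
    have c3 : #|a |: (b |: M)| = #|M|.+2 by rewrite cardsU1 abM c2.
    have s1 : a |: M \subset a |: (b |: M) by rewrite setUS ?subsetUr.
    have s2 : b |: M \subset a |: (b |: M) by rewrite subsetUr.
    have s0 : M \subset a |: (b |: M) by rewrite (subset_trans _ s2) ?subsetUr.
    have cE := subset_leq_card sE.
    have bE : b \in E by apply: (subsetP sE); rewrite !inE eqxx orbT.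
    have d1 := cardED (subset_trans s1 sE).
    have d2 := cardED (subset_trans s2 sE).
    have d0 := cardED (subset_trans s0 sE).
    have d3 := cardED sE.
    have sq : square_in P (E :\: (a |: (b |: M))) (E :\: (a |: M)) (E :\: (b |: M)) (E :\: M).
      split.
      - apply/eqP => h.
        have : b \in E :\: (a |: M) by rewrite in_setD baM bE.
        by rewrite h in_setD setU11.
      - apply: covers_card (inP _ (subxx _) (subsetDl _ _)) (inP _ (setDS E s1) (subsetDl _ _)) (setDS E s1) _.
        by rewrite d1 d3 c1 c3 nat_aux1 // -c3.
      - apply: covers_card (inP _ (setDS E s1) (subsetDl _ _)) (inP _ (setDS E s0) (subsetDl _ _)) (setDS E (subsetUr _ _)) _.
        by rewrite d1 d0 c1 nat_aux2 // -c3.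
      - apply: covers_card (inP _ (subxx _) (subsetDl _ _)) (inP _ (setDS E s2) (subsetDl _ _)) (setDS E s2) _.
        by rewrite d2 d3 c2 c3 nat_aux1 // -c3.
      - apply: covers_card (inP _ (setDS E s2) (subsetDl _ _)) (inP _ (setDS E s0) (subsetDl _ _)) (setDS E (subsetUr _ _)) _.
        by rewrite d2 d0 c2 nat_aux2 // -c3.
    rewrite /d addrC [RHS]addrC.
    exact: z2_sq (He _ _ _ _ sq) (He' _ _ _ _ sq).
  exists (fun x => eta d (E :\: x)) => x y cov.
  case: (cov) => xP yP pxy _.
  have yE := sub y yP; have xE := sub x xP.
  have cl : forall a, a \in y -> a \notin x -> a |: x \in P.
    move=> a ay ax.
    have s : a |: x \subset y by rewrite subUset sub1set ay (proper_sub pxy).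
    exact: (up _ x (subset_trans s yE) (subsetUr _ _) xP).
  have [a [ax ey]] := covers_step cl cov.
  have aE : a \in E by apply: (subsetP yE); rewrite ey setU11.
  set L := E :\: y.
  have e1 : E :\: x = a |: L by rewrite /L ey; apply/setP=> e; rewrite !inE; case: (eqVneq e a) => [->|ne] /=; rewrite ?aE ?(negbTE ax) ?andbF //;
    case h: (e \in x); rewrite ?(subsetP xE e h) //; by case: (e \in E).
  have e2 : E :\: (a |: L) = x by rewrite /L ey; apply/setP=> e; rewrite !inE; case: (eqVneq e a) => [->|ne] /=; rewrite ?aE ?(negbTE ax) ?andbF //;
    case h: (e \in x); rewrite ?(subsetP xE e h) //; by case: (e \in E).
  have e3 : E :\: L = y by rewrite /L ey; apply/setP=> e; rewrite !inE; case: (eqVneq e a) => [->|ne] /=; rewrite ?aE ?(negbTE ax) ?andbF //;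
    case h: (e \in x); rewrite ?(subsetP xE e h) //; by case: (e \in E).
  have aL : a \notin L by rewrite /L ey !inE eqxx.
  have QL : Q (a |: L).
    split; last by rewrite e2.
    by rewrite subUset sub1set aE subsetDl.
  apply: z2_fin2; rewrite e1 (@eta_step _ Q d Qdown Qsq) // /d e2 e3 //.
Qed.
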